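(* Let $n\ge 2$ be an integer. (i) If $n\ne 4,5$, then every polynomial $f\in\mathbb{Z}[x]$ of degree $n$ that is reducible in $\mathbb{Q}[x]$ satisfies $P(f)\le n+2$. (ii) There exists a polynomial $f\in\mathbb{Z}[x]$ of degree $n$, reducible in $\mathbb{Q}[x]$, with $P(f)\ge n+1$. (iii) If $n=4$ or $n=5$, then the maximum of $P(f)$ over all polynomials $f\in\mathbb{Z}[x]$ of degree $n$ that are reducible in $\mathbb{Q}[x]$ is exactly $8$.
   Context: For a polynomial $f$ with rational coefficients, $P(f)=\#\{m\in\mathbb{Z}: f(m)\text{ is prime}\}$. Here ''$f(m)$ is prime'' means that $|f(m)|$ is a prime number, so negative primes $-p$ are counted. A polynomial is reducible in $\mathbb{Q}[x]$ if it is a product of two nonconstant polynomials with rational coefficients. *)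

(* Defs.v *)
From mathcomp Require Import all_boot all_order all_algebra.
Set Implicit Arguments. Unset Strict Implicit. Unset Printing Implicit Defensive.
Import Order.TTheory GRing.Theory Num.Theory.
Local Open Scope ring_scope.

Definition prime_at (f : {poly int}) (m : int) : bool := prime `|f.[m]|%N.

(* P(f) <= k : every finite set of distinct integers m with f(m) prime has
   at most k elements (in particular the set is finite). *)
Definition P_le (f : {poly int}) (k : nat) : Prop :=
  forall s : seq int, uniq s -> all (prime_at f) s -> (size s <= k)%N.

Definition P_ge (f : {poly int}) (k : nat) : Prop :=
  exists s : seq int, [/\ uniq s, all (prime_at f) s & size s = k].

Definition reducibleQ (f : {poly int}) : Prop :=
  exists g h : {poly rat},
    [/\ (1 < size g)%N, (1 < size h)%N & map_poly (intr : int -> rat) f = g * h].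

(* Main.v *)
Require Import Defs.
From mathcomp Require Import all_boot all_order all_algebra all_field.
From mathcomp Require Import zify ring lra.
Set Implicit Arguments. Unset Strict Implicit. Unset Printing Implicit Defensive.
Import Order.TTheory GRing.Theory Num.Theory.
Local Open Scope ring_scope.

Lemma diff_div (g : {poly int}) a b : exists k, g.[a] - g.[b] = (a - b) * k.
Proof.
have : root (g - g.[b]%:P) b by rewrite /root !hornerE subrr.
case/factor_theorem => q hq; exists q.[a].
have := congr1 (horner^~ a) hq; rewrite !hornerE => ->; ring.
Qed.

Lemma triple (g : {poly int}) v a1 a2 a3 b : g.[a1] = v -> g.[a2] = v -> g.[a3] = v ->
  a1 != a2 -> a1 != a3 -> a2 != a3 ->
  exists k, g.[b] - v = (b - a1) * (b - a2) * (b - a3) * k.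
Proof.
move=> h1 h2 h3 n12 n13 n23.
have : root (g - v%:P) a1 by rewrite /root !hornerE h1 subrr.
case/factor_theorem => q1 hq1.
have : root q1 a2.
  have := congr1 (horner^~ a2) hq1; rewrite !hornerE h2 subrr => /esym/eqP.
  by rewrite mulf_eq0 subr_eq0 (eq_sym a2) (negbTE n12) orbF.
case/factor_theorem => q2 hq2.
have : root q2 a3.
  have := congr1 (horner^~ a3) hq1; rewrite hq2 !hornerE h3 subrr => /esym/eqP.
  by rewrite !mulf_eq0 !subr_eq0 !(eq_sym a3) (negbTE n13) (negbTE n23) !orbF.
case/factor_theorem => q3 hq3.
exists q3.[b].
have := congr1 (horner^~ b) hq1; rewrite hq2 hq3 !hornerE => ->; ring.
Qed.

Lemma d2 (x k : int) : x * k = 2 \/ x * k = -2 -> x = 1 \/ x = -1 \/ x = 2 \/ x = -2.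
Proof.
move=> h; have k0 : k <> 0 by move=> k0; rewrite k0 mulr0 in h; lia.
have : x <= 2 /\ -2 <= x by nia.
have : x <> 0 by move=> x0; rewrite x0 mul0r in h; lia.
lia.
Qed.

Definition DD : seq int := [:: 1; -1; 2; -2].
Definition two (x : int) := (x == 2) || (x == -2).

Lemma L3check : all (fun d1 => all (fun d2 => all (fun d3 =>
  [&& d1 != d2, d1 != d3, d2 != d3, ~~ (two d1 && two d2), ~~ (two d1 && two d3)
    & ~~ (two d2 && two d3)] ==> ((d1 + d2 + d3 == 2) || (d1 + d2 + d3 == -2))) DD) DD) DD.
Proof. by []. Qed.

Lemma L3 d1 d2 d3 : d1 \in DD -> d2 \in DD -> d3 \in DD -> d1 != d2 -> d1 != d3 -> d2 != d3 ->
  ~~ (two d1 && two d2) -> ~~ (two d1 && two d3) -> ~~ (two d2 && two d3) ->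
  d1 + d2 + d3 = 2 \/ d1 + d2 + d3 = -2.
Proof.
move=> h1 h2 h3 n12 n13 n23 t12 t13 t23.
have := L3check => /allP /(_ _ h1) /allP /(_ _ h2) /allP /(_ _ h3).
rewrite n12 n13 n23 t12 t13 t23 /= => /orP [] /eqP; by [left|right].
Qed.

Lemma L4check : all (fun d3 => all (fun d4 =>
  [&& d3 != d4 & ~~ (two d3 && two d4)] ==> ((d3 - d4 != 4) && (d3 - d4 != -4))) DD) DD.
Proof. by []. Qed.

Lemma L4 d3 d4 : d3 \in DD -> d4 \in DD -> d3 != d4 -> ~~ (two d3 && two d4) ->
  d3 - d4 <> 4 /\ d3 - d4 <> -4.
Proof.
move=> h3 h4 n t.
have := L4check => /allP /(_ _ h3) /allP /(_ _ h4).
by rewrite n t /= => /andP [/eqP ? /eqP ?].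
Qed.

Lemma F1 (g : {poly int}) v w a b : (w - v = 2 \/ w - v = -2) -> g.[a] = v -> g.[b] = w ->
  b - a \in DD.
Proof.
move=> hvw ha hb; have [k hk] := diff_div g b a.
rewrite ha hb in hk; rewrite hk in hvw.
have := d2 hvw; rewrite !inE; lia.
Qed.

Lemma F2 (g : {poly int}) v w a1 a2 a3 b : (w - v = 2 \/ w - v = -2) ->
  g.[a1] = v -> g.[a2] = v -> g.[a3] = v -> a1 != a2 -> a1 != a3 -> a2 != a3 -> g.[b] = w ->
  ~~ (two (b - a1) && two (b - a2)).
Proof.
move=> hvw h1 h2 h3 n12 n13 n23 hb.
have [k hk] := triple b h1 h2 h3 n12 n13 n23.
rewrite hb in hk; rewrite hk in hvw.
apply/negP => /andP [/orP [] /eqP e1 /orP [] /eqP e2]; rewrite e1 e2 in hvw; lia.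
Qed.

Lemma neqsub (x y z : int) : y != z -> x - y != x - z.
Proof. move=> h; apply/eqP => e; move/eqP: h; apply; lia. Qed.

Lemma sum3 (g : {poly int}) v w a1 a2 a3 b : (w - v = 2 \/ w - v = -2) ->
  g.[a1] = v -> g.[a2] = v -> g.[a3] = v -> a1 != a2 -> a1 != a3 -> a2 != a3 -> g.[b] = w ->
  (b - a1) + (b - a2) + (b - a3) = 2 \/ (b - a1) + (b - a2) + (b - a3) = -2.
Proof.
move=> hvw h1 h2 h3 n12 n13 n23 hb.
have n21 : a2 != a1 by rewrite eq_sym.
have n31 : a3 != a1 by rewrite eq_sym.
have n32 : a3 != a2 by rewrite eq_sym.
apply: L3; try apply: neqsub => //.
- exact: F1 hvw h1 hb.
- exact: F1 hvw h2 hb.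
- exact: F1 hvw h3 hb.
- exact: F2 hvw h1 h2 h3 n12 n13 n23 hb.
- exact: F2 hvw h1 h3 h2 n13 n12 n32 hb.
- exact: F2 hvw h2 h3 h1 n23 n21 n31 hb.
Qed.

Lemma GL (g : {poly int}) (v w : int) (A B : seq int) :
  (w - v = 2 \/ w - v = -2) -> uniq A -> uniq B ->
  all (fun m => g.[m] == v) A -> all (fun m => g.[m] == w) B ->
  ((3 <= size A)%N -> (size B <= 1)%N) /\ ((1 <= size B)%N -> (size A <= 3)%N).
Proof.
move=> hvw uA uB aA aB; split.
  case: A uA aA => [|a1 [|a2 [|a3 A]]] //= uA aA _.
  case: B uB aB => [|b1 [|b2 B]] //= uB aB.
  move: uA uB aA aB; rewrite !inE !negb_or => /and4P [/and3P [n12 n13 _] /andP [n23 _] _ _].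
  move=> /andP [/andP [nb _] _] /and4P [/eqP h1 /eqP h2 /eqP h3 _] /and3P [/eqP hb1 /eqP hb2 _].
  have := sum3 hvw h1 h2 h3 n12 n13 n23 hb1.
  have := sum3 hvw h1 h2 h3 n12 n13 n23 hb2.
  move/eqP: nb; lia.
case: B uB aB => [|b B] //= uB aB _.
case: A uA aA => [|a1 [|a2 [|a3 [|a4 A]]]] //= uA aA.
move: uA aA aB; rewrite !inE !negb_or.
move=> /and4P [/and4P [n12 n13 n14 _] /and3P [n23 n24 _] /andP [n34 _] _].
move=> /and5P [/eqP h1 /eqP h2 /eqP h3 /eqP h4 _] /andP [/eqP hb _].
have := sum3 hvw h1 h2 h3 n12 n13 n23 hb.
have := sum3 hvw h1 h2 h4 n12 n14 n24 hb.
have n31 : a3 != a1 by rewrite eq_sym.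
have n41 : a4 != a1 by rewrite eq_sym.
have := L4 (F1 hvw h3 hb) (F1 hvw h4 hb) (neqsub b n34) (F2 hvw h3 h4 h1 n34 n31 n41 hb).
move/eqP: n34; lia.
Qed.

Lemma abs1 (x : int) : (`|x|%N == 1%N) -> x = 1 \/ x = -1.
Proof. move/eqP; lia. Qed.

Lemma roots_le (g : {poly int}) (v : int) (s : seq int) : (1 < size g)%N -> uniq s ->
  (size (filter (fun m => g.[m] == v) s) <= (size g).-1)%N.
Proof.
move=> sg us.
have gv0 : g - v%:P != 0.
  apply/eqP => e; move: sg; have -> : g = v%:P by apply/eqP; rewrite -subr_eq0 e.
  by rewrite size_polyC; case: (v != 0).
set F := filter (fun m => g.[m] == v) s.
have : (size F < size (g - v%:P)%R)%N.
  apply: max_poly_roots => //; last by rewrite filter_uniq.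
  by apply/allP => m; rewrite mem_filter => /andP[/eqP h _]; rewrite /root !hornerE h subrr.
rewrite size_addl; first by case: (size g) sg.
by rewrite size_opp size_polyC; case: (v != 0) => //=; apply: ltnW.
Qed.

Lemma count_pm1 (g : {poly int}) (s : seq int) : (1 < size g)%N -> uniq s ->
  all (fun m => `|g.[m]|%N == 1%N) s ->
  (size s <= 2 * (size g).-1)%N /\ ((size s <= (size g).-1)%N \/ (size s <= 4)%N).
Proof.
move=> sg us al.
set A := filter (fun m => g.[m] == 1) s.
set B := filter (fun m => g.[m] == -1) s.
have hs : size s = (size A + size B)%N.
  rewrite /A /B !size_filter; elim: s us al {A B} => //= x s IH /andP [_ us] /andP [hx hs].
  rewrite IH //; case: (abs1 hx) => ->; rewrite /=; lia.
have hA := roots_le 1 sg us; have hB := roots_le (-1) sg us.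
rewrite -/A -/B in hA hB.
set d := (size g).-1 in hA hB *.
split; first by rewrite hs; lia.
case: (posnP (size A)) => A0; first by left; lia.
case: (posnP (size B)) => B0; first by left; lia.
right.
have uA : uniq A by rewrite filter_uniq.
have uB : uniq B by rewrite filter_uniq.
have aA : all (fun m => g.[m] == 1) A by apply: filter_all.
have aB : all (fun m => g.[m] == -1) B by apply: filter_all.
have e1 : ((-1) - 1 = 2 :> int) \/ ((-1) - 1 = -2 :> int) by right; lia.
have e2 : (1 - (-1) = 2 :> int) \/ (1 - (-1) = -2 :> int) by left; lia.
have [G1 G2] := GL e1 uA uB aA aB.
have [G3 G4] := GL e2 uB uA aB aA.
move: (G1) (G2 B0) (G3) (G4 A0); rewrite hs; clear e1 e2 G1 G2 G3 G4 aA aB hA hB hs.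
move: A0 B0; set nA := size A; set nB := size B; clearbody nA nB.
move=> A0 B0 G1 G2 G3 G4.
case: (leqP 3 nA) => a3; [move: (G1 a3) | ]; case: (leqP 3 nB) => b3; try move: (G3 b3); lia.
Qed.

Lemma Fp_intr_eq0 (p : nat) (x : int) : prime p ->
  ((x%:~R : 'F_p) == 0) = (p %| `|x|)%N.
Proof.
move=> pp; rewrite [x]intEsign rmorphM /= rmorph_sign mulf_eq0 signr_eq0 /=.
rewrite abszM; have -> : `|(-1) ^+ (x < 0)%R|%N = 1%N by case: (x < 0)%R.
by rewrite mul1n absz_nat (dvdn_pcharf (pchar_Fp pp)) pmulrn.
Qed.

Lemma Phi_dvd (M : nat) : (0 < M)%N -> exists R : {poly int}, 'X^M - 1 = 'Phi_M * R.
Proof.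
move=> M0; rewrite -(prod_Cyclotomic M0) (bigD1_seq M) ?divisors_uniq //.
  by eexists.
by rewrite -dvdn_divisors.
Qed.

Lemma Phi_dvd2 (M d : nat) : (0 < M)%N -> (d %| M)%N -> d != M ->
  exists S : {poly int}, 'X^M - 1 = 'Phi_M * ('Phi_d * S).
Proof.
move=> M0 dM ndM; rewrite -(prod_Cyclotomic M0) (bigD1_seq M) ?divisors_uniq //;
  last by rewrite -dvdn_divisors.
rewrite -big_filter (bigD1_seq d) ?filter_uniq ?divisors_uniq //.
  by eexists.
by rewrite mem_filter ndM -dvdn_divisors.
Qed.

Lemma dir1 (M : nat) : (0 < M)%N -> exists p, prime p /\ (M %| p.-1)%N.
Proof.
case: M => // -[_|M _]; first by exists 2%N.
set M2 := M.+2.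
have M0 : (0 < M2)%N by [].
pose Phi := 'Phi_M2.
have szPhi : (2 <= size Phi)%N by rewrite size_Cyclotomic ltnS totient_gt0.
have [R hR] := Phi_dvd M0.
pose Q := (Phi - 1) * (Phi + 1).
have Q0 : Q != 0.
  rewrite mulf_neq0 //.
    apply: contraTneq szPhi => /eqP; rewrite subr_eq0 => /eqP ->.
    by rewrite size_poly1.
  apply: contraTneq szPhi => /eqP; rewrite addr_eq0 => /eqP ->.
  by rewrite size_polyN size_poly1.
pose rs := [seq ((k.+1 * M2)%N)%:Z | k <- iota 0 (size Q)].
have : ~~ all (root Q) rs.
  apply/negP => allr; move/eqP: Q0; apply; apply: (roots_geq_poly_eq0 allr).
    rewrite map_inj_uniq ?iota_uniq // => i j /eqP; rewrite eqz_nat eqn_pmul2r //.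
    by move/eqP => [].
  by rewrite size_map size_iota.
rewrite -has_predC => /hasP [r /mapP [k _ ->] /= nrootQ].
set a : int := ((k.+1 * M2)%N)%:Z.
have a2 : 2 <= a by rewrite /a lez_nat mulSn; lia.
set v := Phi.[a].
have [v1 vN1] : v != 1 /\ v != -1.
  by move: nrootQ; rewrite rootM negb_or /root !hornerE subr_eq0 addr_eq0 => /andP[].

have hv : a ^+ M2 - 1 = v * R.[a] by rewrite -hornerM -hR !hornerE.
have aM : a ^+ M2 - 1 != 0.
  rewrite subr_eq0 exprS; apply/eqP => h.
  have t1 : 1 <= a ^+ M.+1 by rewrite exprn_ege1 //; lia.
  nia.
have v0 : v != 0 by apply: contraNneq aM => v0; rewrite hv v0 mul0r.
set N := `|v|%N.
have N1 : (1 < N)%N by rewrite /N; lia.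
set p := pdiv N.
have pp : prime p := pdiv_prime N1.
have pN : (p %| N)%N := pdiv_dvd N.
pose alpha : 'F_p := a%:~R.
have hva : (v%:~R : 'F_p) = 0 by apply/eqP; rewrite Fp_intr_eq0.
have aM1 : alpha ^+ M2 = 1.
  apply/eqP; rewrite -subr_eq0.
  have -> : alpha ^+ M2 - 1 = ((a ^+ M2 - 1)%:~R : 'F_p).
    by rewrite rmorphB rmorphXn rmorph1.
  by rewrite hv rmorphM /= hva mul0r.
have alpha0 : alpha != 0.
  apply/eqP => a0; move: aM1; rewrite a0 expr0n /= => /eqP; by rewrite eq_sym oner_eq0.
have M2nz : (M2%:R : 'F_p) != 0.
  apply: contraNneq alpha0 => h; rewrite /alpha /a -pmulrn natrM h mulr0.
  by [].
have prim : M2.-primitive_root alpha.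
  have [m pm mM] := prim_order_exists M0 aM1.
  have [eM | neM] := eqVneq m M2; first by rewrite -eM.
  exfalso.
  have m0 : (0 < m)%N := prim_order_gt0 pm.
  have am1 : alpha ^+ m = 1 := prim_expr_order pm.
  have : (\prod_(d <- divisors m) (map_poly intr ('Phi_d) : {poly 'F_p})).[alpha] == 0.
    rewrite -rmorph_prod prod_Cyclotomic // rmorphB rmorph1 /= map_polyXn.
    by rewrite !hornerE am1 subrr.
  rewrite horner_prod prodf_seq_eq0 => /hasP [d dm /= /eqP dz].
  have dm' : (d %| m)%N by rewrite dvdn_divisors.
  have dM : (d %| M2)%N := dvdn_trans dm' mM.
  have dneM : d != M2.
    have := dvdn_leq m0 dm'; have := dvdn_leq M0 mM; move: neM.
    move=> /eqP ? ? ?; apply/eqP; lia.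
  have [S hS] := Phi_dvd2 M0 dM dneM.
  have rM : root (map_poly intr 'Phi_M2 : {poly 'F_p}) alpha.
    by rewrite /root /alpha horner_map /= hva.
  have rd : root (map_poly intr 'Phi_d : {poly 'F_p}) alpha by rewrite /root dz.
  have hsep := separable_Xn_sub_1 M2nz.
  have : ('X - alpha%:P) ^+ 2 %| ('X^M2 - 1 : {poly 'F_p}).
    have -> : ('X^M2 - 1 : {poly 'F_p}) = map_poly intr ('X^M2 - 1 : {poly int}).
      by rewrite rmorphB rmorph1 rmorphXn /= map_polyX.
    rewrite hS !rmorphM /= mulrA expr2; apply: dvdp_mulr.
    by apply: dvdp_mul; rewrite dvdp_XsubCl.
  by rewrite separable_nosquare // size_XsubC.
have ap : alpha ^+ p.-1 = 1.
  have e : alpha ^+ (p.-1).+1 = alpha.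
    by rewrite prednK ?prime_gt0 //; move: (expf_card alpha); rewrite card_Fp.
  move: e; rewrite exprS => e; apply: (mulfI alpha0); by rewrite e mulr1.
by exists p; split => //; rewrite (prim_order_dvd prim) ap.
Qed.

Lemma prime_mul1 (x y : nat) : prime (x * y) -> x = 1%N \/ y = 1%N.
Proof.
move=> pr; have /primeP [h1 h] := pr.
have := h x (dvdn_mulr _ (dvdnn x)); case/orP => /eqP; first by left.
move=> ex; right; nia.
Qed.

Lemma prime_at_split (g h : {poly int}) m : prime_at (g * h) m ->
  (`|g.[m]|%N == 1%N) || (`|h.[m]|%N == 1%N).
Proof.
rewrite /prime_at hornerM abszM => /prime_mul1 [] ->; by rewrite eqxx ?orbT.
Qed.

Lemma size_split (P Q : pred int) s : all (predU P Q) s -> (size s <= count P s + count Q s)%N.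
Proof. by rewrite all_count => /eqP <-; rewrite -count_predUI leq_addr. Qed.

Lemma Pbound (g h : {poly int}) s : (1 < size g)%N -> (1 < size h)%N -> uniq s ->
  all (prime_at (g * h)) s ->
  exists Ng Nh : nat, [/\ (size s <= Ng + Nh)%N, (Ng <= 2 * (size g).-1)%N,
    (Ng <= (size g).-1)%N \/ (Ng <= 4)%N, (Nh <= 2 * (size h).-1)%N &
    (Nh <= (size h).-1)%N \/ (Nh <= 4)%N].
Proof.
move=> sg sh us al.
pose Pg := fun m => `|g.[m]|%N == 1%N.
pose Ph := fun m => `|h.[m]|%N == 1%N.
have [G1 G2] := @count_pm1 g (filter Pg s) sg (filter_uniq _ us) (filter_all _ _).
have [H1 H2] := @count_pm1 h (filter Ph s) sh (filter_uniq _ us) (filter_all _ _).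
exists (size (filter Pg s)), (size (filter Ph s)); split => //.
rewrite !size_filter; apply: size_split.
by apply/allP => m ms; apply: prime_at_split; move/allP: al; apply.
Qed.

Lemma gauss f : reducibleQ f ->
  exists g h : {poly int}, [/\ f = g * h, (1 < size g)%N & (1 < size h)%N].
Proof.
case=> g' [h' [sg' sh' e]].
have g'0 : g' != 0 by rewrite -size_poly_gt0; apply: ltnW.
have h'0 : h' != 0 by rewrite -size_poly_gt0; apply: ltnW.
have : g' %| map_poly intr f by rewrite e dvdp_mulr.
case/dvdpP_rat_int => p1 [a a0 hp1] [r hr].
have sp1 : size p1 = size g' by rewrite hp1 size_scale // size_rat_int_poly.
have p10 : p1 != 0 by rewrite -size_poly_gt0 sp1; apply: ltnW.
have r0 : r != 0.
  apply/eqP => r0; move: e; rewrite hr r0 mulr0 rmorph0 => /esym/eqP.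
  by rewrite mulf_eq0 (negbTE g'0) (negbTE h'0).
exists p1, r; split => //; first by rewrite sp1.
have := size_rat_int_poly f; rewrite e hr size_mul // size_mul // sp1.
move: sg' sh' => sg hh; move: sg; case: (size g') => // x _; rewrite !addSn /= => /eqP; rewrite eqn_add2l => /eqP <-; exact: hh.
Qed.

Lemma evw (p : nat) (y q : int) : prime p -> y = q * p%:Z -> prime `|y| ->
  y = p%:Z \/ y = - p%:Z.
Proof.
move=> pp hy py.
have : (p %| `|y|)%N.
  have h : (p%:Z %| y)%Z by apply/dvdzP; exists q.
  exact: h.
rewrite dvdn_prime2 // => /eqP e.
have : `|y|%N = p by [].
lia.
Qed.

Lemma np1 (y : int) : prime `|y| -> y <> 1 /\ y <> -1.
Proof. by split => e; move: H; rewrite e. Qed.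

Lemma no4 (Y u : int) : u = 1 \/ u = -1 \/ u = 2 \/ u = -2 ->
  prime `|Y| -> prime `|Y + u| -> prime `|Y + 2 * u| -> prime `|Y + 3 * u| -> False.
Proof.
move=> hu p0 p1 p2 p3.
have [n0 m0] := np1 p0; have [n1 m1] := np1 p1.
have [n2 m2] := np1 p2; have [n3 m3] := np1 p3.
have e2 := divz_eq Y 2; have e3 := divz_eq Y 3.
have r2 : 0 <= (Y %% 2)%Z < 2 by rewrite modz_ge0 // ltz_pmod.
have r3 : 0 <= (Y %% 3)%Z < 3 by rewrite modz_ge0 // ltz_pmod.
move: e2 e3 r2 r3; set q := (Y %/ 2)%Z; set r := (Y %% 2)%Z.
set k := (Y %/ 3)%Z; set s := (Y %% 3)%Z; clearbody q r k s => e2 e3 r2 r3.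
have pr2 : prime 2 by []. have pr3 : prime 3 by [].
have [r0|r1] : r = 0 \/ r = 1 by lia.
- case: hu => [eu|[eu|[eu|eu]]]; subst u.
  + have := @evw 2 Y q pr2 ltac:(lia) p0.
    have := @evw 2 (Y + 2 * 1) (q + 1) pr2 ltac:(lia) p2. lia.
  + have := @evw 2 Y q pr2 ltac:(lia) p0.
    have := @evw 2 (Y + 2 * -1) (q - 1) pr2 ltac:(lia) p2. lia.
  + have := @evw 2 Y q pr2 ltac:(lia) p0.
    have := @evw 2 (Y + 2) (q + 1) pr2 ltac:(lia) p1. lia.
  + have := @evw 2 Y q pr2 ltac:(lia) p0.
    have := @evw 2 (Y + -2) (q - 1) pr2 ltac:(lia) p1. lia.
- case: hu => [eu|[eu|[eu|eu]]]; subst u.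
  + have := @evw 2 (Y + 1) (q + 1) pr2 ltac:(lia) p1.
    have := @evw 2 (Y + 3 * 1) (q + 2) pr2 ltac:(lia) p3. lia.
  + have := @evw 2 (Y + -1) q pr2 ltac:(lia) p1.
    have := @evw 2 (Y + 3 * -1) (q - 1) pr2 ltac:(lia) p3. lia.
  + have [s0|[s1|s2]] : s = 0 \/ s = 1 \/ s = 2 by lia.
    * have := @evw 3 Y k pr3 ltac:(lia) p0.
      have := @evw 3 (Y + 3 * 2) (k + 2) pr3 ltac:(lia) p3. lia.
    * have := @evw 3 (Y + 2) (k + 1) pr3 ltac:(lia) p1. lia.
    * have := @evw 3 (Y + 2 * 2) (k + 2) pr3 ltac:(lia) p2. lia.
  + have [s0|[s1|s2]] : s = 0 \/ s = 1 \/ s = 2 by lia.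
    * have := @evw 3 Y k pr3 ltac:(lia) p0.
      have := @evw 3 (Y + 3 * -2) (k - 2) pr3 ltac:(lia) p3. lia.
    * have := @evw 3 (Y + 2 * -2) (k - 1) pr3 ltac:(lia) p2. lia.
    * have := @evw 3 (Y + -2) k pr3 ltac:(lia) p1. lia.
Qed.

Definition J4 : seq int := [:: 0; 1; 2; 3].
Definition M4 : seq int := [:: -3; -2; -1; 0].

Lemma conf4check : all (fun e1 => all (fun e2 => all (fun f1 =>
  [&& (e2 - (e1 - f1)) \in DD, e1 - f1 != 0 & e1 != e2] ==>
  has (fun m => all (fun j => (m + j) \in [:: 0; e1 - f1; e1; e2]) J4) M4) DD) DD) DD.
Proof. by []. Qed.

Lemma conf4 (a1 a2 b1 b2 : int) : a1 != a2 -> b1 != b2 ->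
  b1 - a1 \in DD -> b2 - a1 \in DD -> b1 - a2 \in DD -> b2 - a2 \in DD ->
  exists t, forall j, j \in J4 -> [|| t + j == a1, t + j == a2, t + j == b1 | t + j == b2].
Proof.
move=> n12 nb h11 h21 h12 h22.
have := conf4check => /allP /(_ _ h11) /allP /(_ _ h21) /allP /(_ _ h12) /implyP H.
have H2 : [&& b2 - a1 - (b1 - a1 - (b1 - a2)) \in DD, b1 - a1 - (b1 - a2) != 0 & b1 - a1 != b2 - a1].
  have -> : b2 - a1 - (b1 - a1 - (b1 - a2)) = b2 - a2 by ring.
  rewrite h22 /=; apply/andP; split.
    by apply/eqP => e; move/eqP: n12; apply; lia.
  by apply/eqP => e; move/eqP: nb; apply; lia.
have /hasP [m _ /allP hm] := H H2.
exists (a1 + m) => j /hm.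
rewrite !inE => /or4P [] /eqP e; apply/or4P;
  [constructor 1 | constructor 2 | constructor 3 | constructor 4]; apply/eqP; lia.
Qed.

Lemma lin2 (g : {poly int}) x : size g = 2%N -> g.[x] = g`_0 + g`_1 * x.
Proof.
move=> sg; rewrite horner_coef sg !big_ord_recl big_ord0 /=.
rewrite expr0 expr1 mulr1 addr0; congr (_ + _).
Qed.

Lemma pgx (g h : {poly int}) x : prime_at (g * h) x -> (h.[x] = 1 \/ h.[x] = -1) ->
  prime `|g.[x]|.
Proof.
rewrite /prime_at hornerM abszM => hp hx.
have e : `|h.[x]|%N = 1%N by case: hx => e; rewrite e.
by rewrite e muln1 in hp.
Qed.

Lemma n3bound (g h : {poly int}) s : size g = 2%N -> size h = 3%N -> uniq s ->
  all (prime_at (g * h)) s -> (size s <= 5)%N.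
Proof.
move=> sg sh us al; rewrite leqNgt; apply/negP => s6.
pose Pg := fun m => `|g.[m]|%N == 1%N.
pose Ph := fun m => `|h.[m]|%N == 1%N.
have sg1 : (1 < size g)%N by rewrite sg.
have sh1 : (1 < size h)%N by rewrite sh.
have [G1 _] := @count_pm1 g (filter Pg s) sg1 (filter_uniq _ us) (filter_all _ _).
have [H1 _] := @count_pm1 h (filter Ph s) sh1 (filter_uniq _ us) (filter_all _ _).
have hsp : (size s <= count Pg s + count Ph s)%N.
  apply: size_split; apply/allP => m ms; apply: prime_at_split; by move/allP: al; apply.
rewrite !size_filter sg sh /= in G1 H1.
have hA := roots_le 1 sh1 us; have hB := roots_le (-1) sh1 us.
set A := filter (fun y => h.[y] == 1) s in hA *.
set B := filter (fun y => h.[y] == -1) s in hB *.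
rewrite sh /= in hA hB.
have hPh : (count Ph s <= size A + size B)%N.
  rewrite /A /B !size_filter -count_predUI.
  apply: leq_trans (leq_addr _ _); apply: sub_count => y.
  by rewrite /Ph /= => /abs1 [] ->; rewrite eqxx ?orbT.
have [sA sB cg] : [/\ size A = 2%N, size B = 2%N & count Pg s = 2%N].
  move: hA hB hPh G1 H1 hsp s6; set x := size A; set y := size B.
  set z := count Pg s; set w := count Ph s; clearbody x y z w; move=> *; split; lia.
have mA : forall x, x \in A -> x \in s /\ h.[x] = 1.
  by move=> x; rewrite mem_filter => /andP [/eqP ? ?].
have mB : forall x, x \in B -> x \in s /\ h.[x] = -1.
  by move=> x; rewrite mem_filter => /andP [/eqP ? ?].
have uA : uniq A := filter_uniq _ us.
have uB : uniq B := filter_uniq _ us.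
have pss : forall x, x \in s -> (h.[x] = 1 \/ h.[x] = -1) -> prime `|g.[x]|.
  by move=> x xs; apply: pgx; move/allP: al; apply.
clearbody A B; clear hA hB hPh.
move: sA uA mA; case: A => [|a1 [|a2 [|? ?]]] //= _; rewrite inE andbT => n12 mA.
move: sB uB mB; case: B => [|b1 [|b2 [|? ?]]] //= _; rewrite inE andbT => nb mB.
have [a1s ha1] := mA a1 (mem_head _ _).
have [a2s ha2] : a2 \in s /\ h.[a2] = 1 by apply: mA; rewrite !inE eqxx orbT.
have [b1s hb1] := mB b1 (mem_head _ _).
have [b2s hb2] : b2 \in s /\ h.[b2] = -1 by apply: mB; rewrite !inE eqxx orbT.
have e : ((-1) - 1 = 2 :> int) \/ ((-1) - 1 = -2 :> int) by right; lia.
have [t ht] := conf4 n12 nb (F1 e ha1 hb1) (F1 e ha1 hb2) (F1 e ha2 hb1) (F1 e ha2 hb2).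
have pj : forall j, j \in J4 -> prime `|g.[t + j]|.
  move=> j /ht /or4P [] /eqP ->; apply: pss => //; by [left|right].
have : size (filter Pg s) = 2%N by rewrite size_filter.
have uG := filter_uniq Pg us.
have aG : all Pg (filter Pg s) := filter_all _ _.
move: uG aG; case: (filter Pg s) => [|m1 [|m2 [|? ?]]] //=.
rewrite inE andbT andbT => nm /andP [pm1 pm2] _.
set u := g`_1.
have u0 : u != 0.
  have : lead_coef g != 0 by rewrite lead_coef_eq0 -size_poly_gt0 sg.
  by rewrite lead_coefE sg.
have lg := @lin2 g _ sg; rewrite -/u in lg.
have hu : u * (m1 - m2) = 2 \/ u * (m1 - m2) = -2.
  have : u * (m1 - m2) != 0 by rewrite mulf_neq0 // subr_eq0.
  move: (abs1 pm1) (abs1 pm2); rewrite !lg; lia.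
have := d2 hu => hu'.
have eg : forall j, g.[t + j] = g.[t] + j * u by move=> j; rewrite !lg; ring.
apply: (@no4 g.[t] u hu').
- by have := pj 0 isT; rewrite addr0.
- by have := pj 1 isT; rewrite eg mul1r.
- by have := pj 2 isT; rewrite eg mulrC.
- by have := pj 3 isT; rewrite eg mulrC.
Qed.

Lemma constr (Bs : seq int) : uniq Bs -> all (fun b => prime `|b|) Bs ->
  1 \notin Bs -> -1 \notin Bs ->
  (\prod_(b <- Bs) ('X - b%:P)).[1] = (\prod_(b <- Bs) ('X - b%:P)).[-1] ->
  (0 < size Bs)%N ->
  exists f : {poly int}, [/\ size f = (size Bs).+2, reducibleQ f & P_ge f (size Bs).+2].
Proof.
move=> uB pB n1 nm1 eB sB.
set B := \prod_(b <- Bs) ('X - b%:P) in eB *.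
set M := B.[1].
have M0 : M != 0.
  rewrite /M /B horner_prod prodf_seq_neq0; apply/allP => b bB /=.
  rewrite !hornerE subr_eq0; apply/eqP => e; move: n1; by rewrite e bB.
have [q [pq dq]] : exists q, prime q /\ (`|M| %| q.-1)%N by apply: dir1; rewrite absz_gt0.
have [c hc] : exists c : int, q%:Z - 1 = c * M.
  apply/dvdzP.
  have -> : q%:Z - 1 = (q.-1)%:Z.
    by have := prime_gt1 pq; case: q {pq dq} => // r _; rewrite /= -addn1 PoszD addrK.
  exact: dq.
have c0 : c != 0 by apply/eqP => c0; move: hc; rewrite c0 mul0r; have := prime_gt1 pq; lia.
pose h := 1 + c *: B.
pose f := h * 'X.
have szB : size B = (size Bs).+1 by rewrite size_prod_XsubC.
have szh : size h = (size Bs).+1.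
  by rewrite /h addrC size_addl size_scale // szB size_poly1 ltnS.
have h0 : h != 0 by rewrite -size_poly_gt0 szh.
have hb : forall b, b \in Bs -> h.[b] = 1.
  move=> b bB; rewrite /h !hornerE.
  have : root B b by rewrite root_prod_XsubC.
  by rewrite /root => /eqP ->; rewrite mulr0 addr0.
have h1 : h.[1] = q%:Z by rewrite /h !hornerE -/M; lia.
have hm1 : h.[-1] = q%:Z by rewrite /h !hornerE -eB -/M; lia.
exists f; split.
- by rewrite /f size_mulX // szh.
- exists (map_poly intr h), 'X; split.
  + by rewrite size_map_inj_poly ?szh //; apply: intr_inj.
  + by rewrite size_polyX.
  + by rewrite /f rmorphM /= map_polyX.
- exists [:: 1, -1 & Bs]; split => //=.
  + rewrite inE n1 nm1 uB andbT /=; by [].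
  + rewrite /prime_at /f !hornerMX h1 hm1.
    rewrite mulr1 mulrN1 abszN absz_nat pq /=; apply/allP => b bB; rewrite hornerMX hb // mul1r.
    by move/allP: pB; apply.
Qed.

Lemma red_prod (p r : {poly int}) : (1 < size p)%N -> (1 < size r)%N -> reducibleQ (p * r).
Proof.
move=> sp sr; exists (map_poly intr p), (map_poly intr r); split.
- by rewrite size_map_inj_poly //; apply: intr_inj.
- by rewrite size_map_inj_poly //; apply: intr_inj.
- by rewrite rmorphM.
Qed.

Lemma size_prod2 (p r : {poly int}) : (0 < size p)%N -> (0 < size r)%N ->
  size (p * r) = (size p + size r).-1.
Proof. by move=> sp sr; rewrite size_mul // -size_poly_gt0. Qed.

Definition ex2 : {poly int} := Poly [:: 0; 1] * Poly [:: 4; 1].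
Definition ex4 : {poly int} := Poly [:: 1; -3; 1] * Poly [:: 29; -11; 1].
Definition ex5 : {poly int} := Poly [:: -1; -2; 1; 1] * Poly [:: 11; -7; 1].

Lemma ex2_ok : [/\ size ex2 = 3%N, reducibleQ ex2 & P_ge ex2 3].
Proof.
have s1 : size (Poly [:: 0; 1] : {poly int}) = 2%N by rewrite (PolyK (c := 0)).
have s2 : size (Poly [:: 4; 1] : {poly int}) = 2%N by rewrite (PolyK (c := 0)).
split.
- by rewrite /ex2 size_prod2 ?s1 ?s2.
- by rewrite /ex2; apply: red_prod; rewrite ?s1 ?s2.
- exists [:: 1; -1; -3]; split => //.
  by rewrite /= /prime_at /ex2 !hornerM !horner_Poly.
Qed.

Lemma ex4_ok : [/\ size ex4 = 5%N, reducibleQ ex4 & P_ge ex4 8].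
Proof.
have s1 : size (Poly [:: 1; -3; 1] : {poly int}) = 3%N by rewrite (PolyK (c := 0)).
have s2 : size (Poly [:: 29; -11; 1] : {poly int}) = 3%N by rewrite (PolyK (c := 0)).
split.
- by rewrite /ex4 size_prod2 ?s1 ?s2.
- by rewrite /ex4; apply: red_prod; rewrite ?s1 ?s2.
- exists [:: 0; 1; 2; 3; 4; 5; 6; 7]; split => //.
  by rewrite /= /prime_at /ex4 !hornerM !horner_Poly.
Qed.

Lemma ex5_ok : [/\ size ex5 = 6%N, reducibleQ ex5 & P_ge ex5 8].
Proof.
have s1 : size (Poly [:: -1; -2; 1; 1] : {poly int}) = 4%N by rewrite (PolyK (c := 0)).
have s2 : size (Poly [:: 11; -7; 1] : {poly int}) = 3%N by rewrite (PolyK (c := 0)).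
split.
- by rewrite /ex5 size_prod2 ?s1 ?s2.
- by rewrite /ex5; apply: red_prod; rewrite ?s1 ?s2.
- exists [:: -2; -1; 0; 1; 2; 3; 4; 5]; split => //.
  by rewrite /= /prime_at /ex5 !hornerM !horner_Poly.
Qed.

Fixpoint pseq (k m : nat) : seq nat :=
  if k is k'.+1 then let p := sval (prime_above m) in p :: pseq k' p else [::].

Lemma pseq_prop k m : [/\ size (pseq k m) = k, uniq (pseq k m), all prime (pseq k m)
  & all (fun p => m < p)%N (pseq k m)].
Proof.
elim: k m => [|k IH] m //=.
case: (prime_above m) => p hp pp /=.
have [s u a g] := IH p.
split.
- by rewrite s.
- rewrite u andbT; apply/negP => /(allP g); by rewrite ltnn.
- by rewrite pp a.
- rewrite hp /=; apply/allP => x /(allP g) px; exact: ltn_trans hp px.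
Qed.

Fixpoint pairs (ps : seq nat) : seq int :=
  if ps is p :: ps' then p%:Z :: - p%:Z :: pairs ps' else [::].

Lemma pairs_mem x ps : x \in pairs ps -> (`|x|%N \in ps).
Proof.
elim: ps => //= p ps IH; rewrite !inE => /orP [/eqP -> | /orP [/eqP -> | /IH ->]].
- by rewrite absz_nat eqxx.
- by rewrite abszN absz_nat eqxx.
- by rewrite orbT.
Qed.

Lemma pairs_size ps : size (pairs ps) = (2 * size ps)%N.
Proof. elim: ps => //= p ps ->; lia. Qed.

Lemma pairs_uniq ps : uniq ps -> all (fun p => 0 < p)%N ps -> uniq (pairs ps).
Proof.
elim: ps => //= p ps IH /andP [nps ups] /andP [p0 aps].
rewrite IH // andbT !inE negb_or; apply/andP; split; first (apply/andP; split).
- by apply/eqP => e; move: p0; have : (p%:Z = - p%:Z) := e; lia.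
- by apply: contra nps => /pairs_mem; rewrite absz_nat.
- by apply: contra nps => /pairs_mem; rewrite abszN absz_nat.
Qed.

Lemma pairs_ev ps : (\prod_(b <- pairs ps) ('X - b%:P)).[1] =
  (\prod_(b <- pairs ps) ('X - b%:P)).[-1] :> int.
Proof.
elim: ps => [|p ps IH] /=; first by rewrite big_nil !hornerC.
rewrite !big_cons !hornerM IH !hornerXsubC !mulrA; congr (_ * _); rewrite opprK; ring.
Qed.

Lemma combo (Bs0 : seq int) (ps : seq nat) :
  uniq Bs0 -> all (fun b => prime `|b|) Bs0 -> all (fun b => `|b| <= 6)%N Bs0 ->
  (\prod_(b <- Bs0) ('X - b%:P)).[1] = (\prod_(b <- Bs0) ('X - b%:P)).[-1] :> int ->
  uniq ps -> all prime ps -> all (fun p => 6 < p)%N ps ->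
  (0 < size Bs0 + size ps)%N ->
  exists f : {poly int}, [/\ size f = (size Bs0 + 2 * size ps).+2, reducibleQ f
     & P_ge f (size Bs0 + 2 * size ps).+2].
Proof.
move=> u0 p0 s0 e0 up pp gp sz.
rewrite -pairs_size -size_cat.
have pm : forall x, x \in pairs ps -> prime `|x| /\ (6 < `|x|)%N.
  by move=> x /pairs_mem xp; split; [move/allP: pp; apply | move/allP: gp; apply].
have sm : forall x, x \in Bs0 -> prime `|x| /\ (`|x| <= 6)%N.
  by move=> x xB; split; [move/allP: p0; apply | move/allP: s0; apply].
apply: constr.
- rewrite cat_uniq u0 /=; apply/andP; split; last first.
    by apply: pairs_uniq => //; apply/allP => p /(allP gp); apply: leq_trans.
  apply/negP => /hasP [x /pm [_ h1] /sm [_ h2]]; lia.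
- apply/allP => x; rewrite mem_cat => /orP [/sm [] | /pm []] //.
- rewrite mem_cat negb_or; apply/andP; split; apply/negP.
    by move=> /sm [/prime_gt1].
  by move=> /pm [/prime_gt1].
- rewrite mem_cat negb_or; apply/andP; split; apply/negP.
    by move=> /sm [/prime_gt1].
  by move=> /pm [/prime_gt1].
- by rewrite big_cat /= !hornerM e0 pairs_ev.
- rewrite size_cat pairs_size; lia.
Qed.

Lemma partii n : (2 <= n)%N ->
  exists f : {poly int}, [/\ size f = n.+1, reducibleQ f & P_ge f n.+1].
Proof.
move=> n2; case: (eqVneq n 2) => [-> | n2'].
  by have [? ? ?] := ex2_ok; exists ex2.
have n3 : (3 <= n)%N by lia.
have hn := odd_double_half n.
case: (boolP (odd n)) => on; [rewrite on in hn | rewrite (negbTE on) in hn].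
- have [s u a g] := pseq_prop (n./2) 6.
  have e0 : (\prod_(b <- [::]) ('X - b%:P)).[1] = (\prod_(b <- [::]) ('X - b%:P)).[-1] :> int.
    by rewrite big_nil !hornerC.
  move: hn; rewrite add1n -muln2 => hn.
  have sz : (0 < size ([::] : seq int) + size (pseq n./2 6))%N by rewrite s /=; lia.
  have [f [sf rf pf]] := @combo [::] (pseq n./2 6) isT isT isT e0 u a g sz.
  exists f; move: sf rf pf; rewrite s /=.
  have -> : (2 * n./2).+2 = n.+1 by lia.
  by [].
- have [s u a g] := pseq_prop (n./2 - 2) 6.
  have e0 : (\prod_(b <- [:: 2; -3; -5]) ('X - b%:P)).[1] =
            (\prod_(b <- [:: 2; -3; -5]) ('X - b%:P)).[-1] :> int.
    by rewrite !big_cons big_nil !hornerE.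
  have [f [sf rf pf]] := @combo [:: 2; -3; -5] (pseq (n./2 - 2) 6) isT isT isT e0 u a g isT.
  exists f; move: sf rf pf; rewrite s /=.
  have -> : (3 + 2 * (n./2 - 2)).+2 = n.+1 by move: hn; rewrite add0n -muln2; lia.
  by [].
Qed.

Lemma bound_gen (f : {poly int}) (n : nat) (s : seq int) : size f = n.+1 -> reducibleQ f ->
  uniq s -> all (prime_at f) s ->
  exists d e Ng Nh : nat, [/\ n = (d + e)%N, (1 <= d)%N, (1 <= e)%N, (size s <= 5)%N \/ ~ (d = 1%N /\ e = 2%N) /\ ~ (d = 2%N /\ e = 1%N) &
    [/\ (size s <= Ng + Nh)%N, (Ng <= 2 * d)%N, (Ng <= d)%N \/ (Ng <= 4)%N, (Nh <= 2 * e)%N &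
    (Nh <= e)%N \/ (Nh <= 4)%N]].
Proof.
move=> sf rf us al.
have [g [h [efg sg sh]]] := gauss rf.
rewrite efg in sf al.
have g0 : g != 0 by rewrite -size_poly_gt0; apply: ltnW.
have h0 : h != 0 by rewrite -size_poly_gt0; apply: ltnW.
rewrite size_mul // in sf.
have [Ng [Nh [B1 B2 B3 B4 B5]]] := Pbound sg sh us al.
exists (size g).-1, (size h).-1, Ng, Nh.
have hn : n = ((size g).-1 + (size h).-1)%N.
  move: sf sg sh; case: (size g) => // a; case: (size h) => // b; rewrite addSn addnS /=.
  by move=> [] ->.
split => //.
- by move: sg; case: (size g).
- by move: sh; case: (size h).
- have P1 : forall x y : nat, (1 < x)%N -> x.-1 = y -> x = y.+1.
    by move=> [|x] y //= _ ->.
  have [c1|c1] := boolP (((size g).-1 == 1%N) && ((size h).-1 == 2%N)).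
    case/andP: c1 => /eqP /(P1 _ _ sg) e1 /eqP /(P1 _ _ sh) e2.
    by left; apply: (n3bound e1 e2 us al).
  have [c2|c2] := boolP (((size g).-1 == 2%N) && ((size h).-1 == 1%N)).
    case/andP: c2 => /eqP /(P1 _ _ sg) e1 /eqP /(P1 _ _ sh) e2.
    by left; apply: (n3bound e2 e1 us); rewrite mulrC.
  right; split => -[e1 e2]; [move: c1 | move: c2]; by rewrite e1 e2.
Qed.

Theorem theorem1 (n : nat) (hn : (2 <= n)%N) :
  [/\ (n <> 4%N /\ n <> 5%N ->
        forall f : {poly int}, size f = n.+1 -> reducibleQ f -> P_le f (n + 2)),
      (exists f : {poly int}, [/\ size f = n.+1, reducibleQ f & P_ge f n.+1])
    & (n = 4%N \/ n = 5%N ->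
        (forall f : {poly int}, size f = n.+1 -> reducibleQ f -> P_le f 8)
        /\ (exists f : {poly int}, [/\ size f = n.+1, reducibleQ f & P_ge f 8]))].
Proof.
split.
- move=> [n4 n5] f sf rf s us al.
  have [d [e [Ng [Nh [hn' d1 e1 hc [B1 B2 B3 B4 B5]]]]]] := bound_gen sf rf us al.
  lia.
- exact: partii hn.
- move=> h45; split.
  + move=> f sf rf s us al.
    have [d [e [Ng [Nh [hn' d1 e1 hc [B1 B2 B3 B4 B5]]]]]] := bound_gen sf rf us al.
    lia.
  + case: h45 => ->; [exists ex4; exact: ex4_ok | exists ex5; exact: ex5_ok].
Qed.
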